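(* Let $R$ be a commutative Bezout domain and $A,B\in M_n(R)$. Then there exists an invertible $2n\times 2n$ matrix $F$ over $R$ such that $$\begin{pmatrix} A & B\\ 0 & B\end{pmatrix}F=\begin{pmatrix} D & 0\\ * & M\end{pmatrix},$$ where $D$ is a left greatest common divisor of $A$ and $B$ and $M$ is a right least common multiple of $A$ and $B$ (here $*$ denotes some $n\times n$ matrix).
   Context: A commutative Bezout domain is a commutative integral domain with $1\ne0$ in which every finitely generated ideal is principal. For $A,B\in M_n(R)$: $D$ is a left common divisor of $A,B$ if $A=DA_1$, $B=DB_1$ for some $A_1,B_1\in M_n(R)$; $D$ is a left greatest common divisor if moreover every left common divisor $D'$ of $A,B$ is a left divisor of $D$ (i.e. $D=D'C$ for some $C$). $M$ is a right common multiple of $A,B$ if $M=AP=BQ$ for some $P,Q\in M_n(R)$; it is a right least common multiple if moreover $M$ is a left divisor of every right common multiple of $A$ and $B$. *)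

(* Defs.v *)
From mathcomp Require Import all_boot all_algebra.
Set Implicit Arguments. Unset Strict Implicit. Unset Printing Implicit Defensive.
Import GRing.Theory.
Local Open Scope ring_scope.

(* A commutative Bezout domain: an integral domain (idomainType, so 1 != 0)
   in which every finitely generated ideal is principal. *)
Definition bezout_domain (R : idomainType) : Prop :=
  forall (k : nat) (a : 'I_k -> R), exists d : R,
    forall x : R, (exists c : 'I_k -> R, x = \sum_(i < k) c i * a i)
                  <-> (exists y : R, x = y * d).

Definition left_divisor (R : idomainType) (n : nat) (D A : 'M[R]_n) : Prop :=
  exists C : 'M[R]_n, A = D *m C.

Definition left_common_divisor (R : idomainType) (n : nat) (A B D : 'M[R]_n) : Prop :=
  left_divisor D A /\ left_divisor D B.

Definition left_gcd (R : idomainType) (n : nat) (A B D : 'M[R]_n) : Prop :=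
  left_common_divisor A B D /\
  forall D' : 'M[R]_n, left_common_divisor A B D' -> left_divisor D' D.

Definition right_common_multiple (R : idomainType) (n : nat) (A B M : 'M[R]_n) : Prop :=
  exists P Q : 'M[R]_n, M = A *m P /\ M = B *m Q.

Definition right_lcm (R : idomainType) (n : nat) (A B M : 'M[R]_n) : Prop :=
  right_common_multiple A B M /\
  forall M' : 'M[R]_n, right_common_multiple A B M' -> left_divisor M M'.

(* Main.v *)
Require Import Defs.
From mathcomp Require Import all_boot all_algebra ring zify.
Set Implicit Arguments. Unset Strict Implicit. Unset Printing Implicit Defensive.
Import GRing.Theory.
Local Open Scope ring_scope.

Definition acts (R : idomainType) k (Z : {set 'I_k}) (U : 'M[R]_k) :=
  forall i j, (i \notin Z) || (j \notin Z) -> U i j = (i == j)%:R.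

Definition mx2 (R : idomainType) k (p q : 'I_k) (a b c d : R) : 'M[R]_k :=
  \matrix_(i, j) if i == p then (if j == p then a else if j == q then b else 0)
                 else if i == q then (if j == p then c else if j == q then d else 0)
                 else (i == j)%:R.

Lemma sum_delta (R : idomainType) k (i : 'I_k) (F : 'I_k -> R) :
  \sum_l F l * (l == i)%:R = F i.
Proof.
rewrite (bigD1 i) //= eqxx mulr1 big1 ?addr0 // => l /negbTE ->; by rewrite mulr0.
Qed.

Lemma mulmx_mx2E (R : idomainType) m k (N : 'M[R]_(m,k)) p q a b c d i j :
  p != q ->
  (N *m mx2 p q a b c d) i j =
  if j == p then N i p * a + N i q * c
  else if j == q then N i p * b + N i q * d else N i j.
Proof.
move=> npq; have nqp : (q == p) = false by rewrite eq_sym (negbTE npq).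
have npq' := negbTE npq; rewrite mxE.
have [jp|njp] := eqVneq j p.
  rewrite (bigD1 p) //= (bigD1 q) 1?eq_sym //= !mxE jp !eqxx ?npq' ?nqp /=.
  rewrite big1 ?addr0 // => l /andP[lp lq].
  by rewrite mxE (negbTE lp) (negbTE lq) mulr0.
have [jq|njq] := eqVneq j q.
  rewrite jq (bigD1 p) //= (bigD1 q) 1?eq_sym //= !mxE !eqxx ?npq' ?nqp /=.
  rewrite big1 ?addr0 // => l /andP[lp lq].
  by rewrite mxE (negbTE lp) (negbTE lq) mulr0.
rewrite -(sum_delta j (fun l => N i l)); apply: eq_bigr => l _.
rewrite mxE (negbTE njp) (negbTE njq).
have [->|lp] := eqVneq l p; first by rewrite eq_sym (negbTE njp) mulr0.
by have [->|lq] := eqVneq l q; first by rewrite eq_sym (negbTE njq) mulr0.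
Qed.

Lemma acts_mx2 (R : idomainType) k (p q : 'I_k) (a b c d : R) :
  acts [set p; q] (mx2 p q a b c d).
Proof.
move=> i j; rewrite !inE mxE => /orP[]/norP[xp xq].
  by rewrite (negbTE xp) (negbTE xq).
case: ifP => [/eqP->|_]; first by rewrite (negbTE xp) (negbTE xq) eq_sym (negbTE xp).
case: ifP => [/eqP->|_]; last by [].
by rewrite (negbTE xp) (negbTE xq) eq_sym (negbTE xq).
Qed.
Lemma bez2 (R : idomainType) (hR : bezout_domain R) (a b : R) :
  exists x y a' b' d : R, [/\ a = d * a', b = d * b' & d = x * a + y * b].
Proof.
pose f := fun i : 'I_2 => if val i == 0%N then a else b.
have [d Hd] := hR 2%N f.
have s2 : forall c : 'I_2 -> R, \sum_(i < 2) c i * f i = c ord0 * a + c ord_max * b.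
  move=> c; rewrite big_ord_recl big_ord1.
  by have -> : lift ord0 (ord0 : 'I_1) = (ord_max : 'I_2) by apply: val_inj.
have [c Hc] := (proj2 (Hd d)) (ex_intro _ 1 (esym (mul1r d))).
have [a' Ha] : exists y, a = y * d.
  apply/(proj1 (Hd a)); exists (fun i : 'I_2 => if val i == 0%N then 1 else 0).
  by rewrite s2 /= mul1r mul0r addr0.
have [b' Hb] : exists y, b = y * d.
  apply/(proj1 (Hd b)); exists (fun i : 'I_2 => if val i == 0%N then 0 else 1).
  by rewrite s2 /= mul1r mul0r add0r.
exists (c ord0), (c ord_max), a', b', d; split; first by rewrite Ha mulrC.
  by rewrite Hb mulrC.
by rewrite Hc s2.
Qed.

Lemma col_op (R : idomainType) (hR : bezout_domain R) m k (N : 'M[R]_(m,k)) i0 p q :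
  p != q -> exists U : 'M[R]_k, [/\ U \in unitmx, acts [set p; q] U,
    (N *m U) i0 q = 0 & forall i j, j != p -> j != q -> (N *m U) i j = N i j].
Proof.
move=> npq; have nqp : (q == p) = false by rewrite eq_sym (negbTE npq).
have npq' := negbTE npq.
have t1 : (true%:R : R) = 1 by [].
have f0 : (false%:R : R) = 0 by [].
have [x [y [a' [b' [d [Ha Hb Hd]]]]]] := bez2 hR (N i0 p) (N i0 q).
have [d0|dn0] := eqVneq d 0.
  exists 1%:M; split; first exact: unitmx1.
  - by move=> i j _; rewrite mxE.
  - by rewrite mulmx1 Hb d0 mul0r.
  - by move=> i j _ _; rewrite mulmx1.
have H1 : x * a' + y * b' = 1.
  apply: (mulfI dn0); rewrite mulr1 {2}Hd Ha Hb; ring.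
exists (mx2 p q x (- b') y a'); split.
- apply: (proj1 (@mulmx1_unit _ _ _ (mx2 p q a' b' (- y) x) _)).
  apply/matrixP => i j; rewrite mulmx_mx2E // !mxE.
  have [->|ip] := eqVneq i p.
    rewrite ?eqxx ?npq' ?nqp ?t1 ?f0.
    have [?|jp] := eqVneq j p; first subst j; first by rewrite ?eqxx ?npq' ?nqp ?t1 ?f0 -H1; ring.
    have [?|jq] := eqVneq j q; first subst j; last by rewrite ?eqxx ?npq' ?nqp ?t1 ?f0.
    by rewrite ?eqxx ?npq' ?nqp ?t1 ?f0; ring.
  have [->|iq] := eqVneq i q.
    rewrite ?eqxx ?npq' ?nqp ?t1 ?f0.
    have [?|jp] := eqVneq j p; first subst j; first by rewrite ?eqxx ?npq' ?nqp ?t1 ?f0; ring.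
    have [?|jq] := eqVneq j q; first subst j; last by rewrite ?eqxx ?npq' ?nqp ?t1 ?f0.
    by rewrite ?eqxx ?npq' ?nqp ?t1 ?f0 -H1; ring.
  have [?|jp] := eqVneq j p; first subst j; first by rewrite ?(negbTE ip) ?(negbTE iq) ?eqxx ?npq' ?nqp ?t1 ?f0; ring.
  have [?|jq] := eqVneq j q; first subst j; first by rewrite ?(negbTE ip) ?(negbTE iq) ?eqxx ?npq' ?nqp ?t1 ?f0; ring.
  by [].
- exact: acts_mx2.
- rewrite mulmx_mx2E // ?eqxx ?npq' ?nqp ?t1 ?f0 Ha Hb; ring.
- by move=> i j jp jq; rewrite mulmx_mx2E // (negbTE jp) (negbTE jq).
Qed.

Lemma acts1 (R : idomainType) k (Z : {set 'I_k}) : acts Z (1%:M : 'M[R]_k).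
Proof. by move=> i j _; rewrite mxE. Qed.

Lemma acts_sub (R : idomainType) k (Z1 Z2 : {set 'I_k}) (U : 'M[R]_k) :
  Z1 \subset Z2 -> acts Z1 U -> acts Z2 U.
Proof.
move=> sZ hU i j /orP[] h; apply: hU; apply/orP.
  by left; apply: contra h; apply: (subsetP sZ).
by right; apply: contra h; apply: (subsetP sZ).
Qed.

Lemma acts_right (R : idomainType) m k (Z : {set 'I_k}) (U : 'M[R]_k) (C : 'M[R]_(m,k)) i j :
  acts Z U -> j \notin Z -> (C *m U) i j = C i j.
Proof.
move=> hU jZ; rewrite mxE -[RHS](sum_delta j (fun l => C i l)).
by apply: eq_bigr => l _; rewrite hU // jZ orbT.
Qed.

Lemma acts_left (R : idomainType) c k (Z : {set 'I_k}) (U : 'M[R]_k) (v : 'M[R]_(k,c)) j x :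
  acts Z U -> j \notin Z -> (U *m v) j x = v j x.
Proof.
move=> hU jZ; rewrite mxE (bigD1 j) //= hU ?jZ // eqxx mul1r big1 ?addr0 //.
by move=> l /negbTE lj; rewrite hU ?jZ // eq_sym lj mul0r.
Qed.

Lemma acts_mul (R : idomainType) k (Z : {set 'I_k}) (U V : 'M[R]_k) :
  acts Z U -> acts Z V -> acts Z (U *m V).
Proof.
move=> hU hV i j /orP[] h.
  by rewrite (acts_left V j hU h) hV ?h.
by rewrite (acts_right U i hV h) hU ?h ?orbT.
Qed.

Lemma zero_cols (R : idomainType) m k (Z : {set 'I_k}) (U : 'M[R]_k) (C : 'M[R]_(m,k)) i :
  (forall j, j \in Z -> C i j = 0) -> acts Z U -> forall j, j \in Z -> (C *m U) i j = 0.
Proof.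
move=> h0 hU j jZ; rewrite mxE big1 // => l _.
case: (boolP (l \in Z)) => lZ; first by rewrite h0 // mul0r.
rewrite hU ?lZ //; have -> : (l == j) = false by apply: contraNF lZ => /eqP->.
by rewrite mulr0.
Qed.

Lemma row_reduce (R : idomainType) (hR : bezout_domain R) m k (N : 'M[R]_(m,k)) i0 p :
  forall W : {set 'I_k}, p \notin W -> exists U : 'M[R]_k,
    [/\ U \in unitmx, acts (p |: W) U & forall j, j \in W -> (N *m U) i0 j = 0].
Proof.
move=> W; elim: {W}#|W| {-2}W (eqxx #|W|) => [|c IH] W /eqP cW pW.
  exists 1%:M; split; [exact: unitmx1 | exact: acts1 |].
  by move=> j; rewrite (cards0_eq cW) inE.
have [q qW] : exists q, q \in W.
  by apply/set0Pn; rewrite -card_gt0 cW.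
have cW0 : #|W :\ q| == c.
  by apply/eqP; apply: eq_add_S; rewrite -cW (cardsD1 q W) qW.
have pW0 : p \notin W :\ q by rewrite !inE negb_and pW orbT.
have [U0 [uU0 aU0 zU0]] := IH _ cW0 pW0.
have npq : p != q by apply: contraNneq pW => ->.
have [U1 [uU1 aU1 zq o1]] := col_op hR (N *m U0) i0 npq.
exists (U0 *m U1); split.
- by rewrite unitmx_mul uU0.
- apply: acts_mul.
    by apply: acts_sub aU0; apply: setUS; apply: subD1set.
  apply: acts_sub aU1; apply/subsetP => x; rewrite !inE => /orP[]/eqP->.
    by rewrite eqxx.
  by rewrite qW orbT.
- move=> j jW; rewrite mulmxA.
  have [->|jq] := eqVneq j q; first exact: zq.
  have jp : j != p by apply: contraNneq pW => <-.
  by rewrite o1 // zU0 // !inE jq.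
Qed.

Lemma reduce (R : idomainType) (hR : bezout_domain R) m k (C : 'M[R]_(m,k))
    (T : {set 'I_k}) (w : 'I_k -> nat) : injective w ->
  forall S : {set 'I_m}, exists (U : 'M[R]_k) (Z : {set 'I_k}),
  [/\ U \in unitmx, acts T U, Z \subset T,
      (forall i j, i \in S -> j \in Z -> (C *m U) i j = 0) &
      [/\ (#|T :\: Z| <= #|S|)%N,
      (forall j l, j \in T -> j \notin Z -> l \in Z -> (w j < w l)%N) &
      (forall c (v : 'M[R]_(k,c)), (forall j x, j \notin T -> v j x = 0) ->
         (forall i x, i \in S -> (C *m U *m v) i x = 0) ->
         forall j x, j \in T -> j \notin Z -> v j x = 0)]].
Proof.
move=> winj S; elim: {S}#|S| {-2}S (eqxx #|S|) => [|c IH] S /eqP cS.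
  exists 1%:M, T; split; last split.
  - exact: unitmx1.
  - exact: acts1.
  - exact: subxx.
  - by move=> i j; rewrite (cards0_eq cS) inE.
  - by rewrite setDv cards0.
  - by move=> j l ->.
  - by move=> c' v _ _ j x ->.
have [i0 i0S] : exists i0, i0 \in S.
  by apply/set0Pn; rewrite -card_gt0 cS.
have cS0 : #|S :\ i0| == c.
  by apply/eqP; apply: eq_add_S; rewrite -cS (cardsD1 i0 S) i0S.
have [U [Z [uU aU ZT zU [cZ oZ iZ]]]] := IH _ cS0.
have S0S : forall i, i \in S -> i != i0 -> i \in S :\ i0.
  by move=> i iS ii0; rewrite !inE ii0.
case: (set_0Vmem Z) => [Z0 | [j0 j0Z]].
  exists U, Z; split => //; last split => //.
  - by move=> i j _; rewrite Z0 inE.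
  - by apply: (leq_trans cZ); rewrite cS (eqP cS0) leqnSn.
  - move=> c' v hv hS; apply: iZ => // i x; rewrite !inE => /andP[_ iS].
    exact: hS.
pose p := [arg min_(j < j0 in Z) w j].
have [pZ pmin] : p \in Z /\ forall l, l \in Z -> (w p <= w l)%N.
  by rewrite /p; case: arg_minnP.
have pW : p \notin Z :\ p by rewrite setD11.
have [U' [uU' aU' zU']] := row_reduce hR (C *m U) i0 pW.
rewrite setD1K // in aU'.
have aTU' : acts T U' by apply: acts_sub aU'.
have sT : forall c' (v : 'M[R]_(k,c')), (forall j x, j \notin T -> v j x = 0) ->
    forall j x, j \notin T -> (U' *m v) j x = 0.
  move=> c' v hv j x jT; rewrite (acts_left v x aTU' jT); exact: hv.
have inj0 : forall c' (v : 'M[R]_(k,c')), (forall j x, j \notin T -> v j x = 0) ->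
    (forall i x, i \in S :\ i0 -> (C *m (U *m U') *m v) i x = 0) ->
    forall j x, j \in T -> j \notin Z -> v j x = 0.
  move=> c' v hv hS j x jT jZ.
  rewrite -(acts_left v x aU' jZ); apply: (iZ _ _ (sT _ _ hv)) => //.
  by move=> i y iS; have := hS i y iS; rewrite !mulmxA.
have zS0 : forall i j, i \in S :\ i0 -> j \in Z -> (C *m (U *m U')) i j = 0.
  move=> i j iS jZ; rewrite mulmxA; apply: zero_cols aU' j jZ.
  by move=> l lZ; apply: zU.
have [/eqP piv0|pivn0] := boolP ((C *m U *m U') i0 p == 0).
  exists (U *m U'), Z; split => //; last split => //.
  - by rewrite unitmx_mul uU uU'.
  - exact: acts_mul.
  - move=> i j iS jZ; have [->|ii0] := eqVneq i i0; last by apply: zS0 => //; apply: S0S.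
    rewrite mulmxA; have [->|jp] := eqVneq j p; first exact: piv0.
    by apply: zU'; rewrite !inE jp.
  - by apply: (leq_trans cZ); rewrite cS (eqP cS0) leqnSn.
  - move=> c' v hv hS; apply: inj0 => // i x; rewrite !inE => /andP[_ iS].
    exact: hS.
exists (U *m U'), (Z :\ p); split => //; last split => //.
- by rewrite unitmx_mul uU uU'.
- exact: acts_mul.
- by apply: subset_trans ZT; apply: subD1set.
- move=> i j iS; rewrite !inE => /andP[jp jZ].
  have [->|ii0] := eqVneq i i0; last by apply: zS0 => //; apply: S0S.
  by rewrite mulmxA; apply: zU'; rewrite !inE jp.
- have sub : T :\: (Z :\ p) \subset p |: (T :\: Z).
    apply/subsetP => x; rewrite !inE negb_and negbK => /andP[/orP[->//|xZ] xT].
    by rewrite xZ xT orbT.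
  apply: (leq_trans (subset_leq_card sub)); rewrite cardsU1 cS -add1n.
  by apply: leq_add; [exact: leq_b1 | rewrite -(eqP cS0)].
- move=> j l jT; rewrite !inE negb_and negbK => /orP[/eqP->|jZ] /andP[lp lZ].
    rewrite ltn_neqAle pmin // andbT; apply: contra lp => /eqP /winj ->.
    by [].
  exact: oZ.
- move=> c' v hv hS j x jT; rewrite !inE negb_and negbK => /orP[/eqP->|jZ];
    last by apply: inj0 => // i y; rewrite !inE => /andP[_ iS]; apply: hS.
  have h0 : forall j, j \in T -> j \notin Z -> v j x = 0.
    by move=> j' j'T j'Z; apply: inj0 => // i y; rewrite !inE => /andP[_ iS]; apply: hS.
  have := hS i0 x i0S; rewrite mxE (bigD1 p) //= big1 ?addr0.
    by rewrite mulmxA => /eqP; rewrite mulf_eq0 (negbTE pivn0) /= => /eqP.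
  move=> l lp; rewrite mulmxA.
  case: (boolP (l \in Z)) => lZ.
    by rewrite zU' ?mul0r // !inE lp.
  case: (boolP (l \in T)) => lT; first by rewrite h0 ?mulr0.
  by rewrite hv ?mulr0.
Qed.

Theorem theorem1p18 (R : idomainType) (hR : bezout_domain R) (n : nat)
    (A B : 'M[R]_n) :
  exists F : 'M[R]_(n + n), F \in unitmx /\
    exists (D M X : 'M[R]_n),
      block_mx A B 0 B *m F = block_mx D 0 X M /\
      left_gcd A B D /\ right_lcm A B M.
Proof.
have [F1 [Z1 [uF1 _ _ zE [cZ1 oZ1 iZ1]]]] :=
  reduce hR (row_mx A B) [set: 'I_(n + n)] (@ord_inj _) [set: 'I_n].
rewrite cardsT card_ord in cZ1.
have R1 : forall j : 'I_n, rshift n j \in Z1.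
  move=> j; apply/negPn/negP => jZ.
  have sub : rshift n j |: [set lshift n l | l : 'I_n] \subset [set: 'I_(n + n)] :\: Z1.
    apply/subsetP => x; rewrite !inE => /orP[/eqP->|/imsetP[l _ ->]]; first by rewrite jZ.
    rewrite andbT; apply/negP => lZ; have := oZ1 _ _ (in_setT _) jZ lZ.
    rewrite /= ; have := ltn_ord l; lia.
  have := subset_leq_card sub; rewrite cardsU1 card_imset; last exact: lshift_inj.
  have -> : rshift n j \notin [set lshift n l | l : 'I_n].
    apply/imsetP => [[l _ /(congr1 val)]] /=; have := ltn_ord l; lia.
  rewrite ?cardsT card_ord /= => h; have := leq_trans h cZ1; lia.
pose w := fun j : 'I_(n + n) => ((n + n) - nat_of_ord j)%N.
have winj : injective w.
  move=> a b; rewrite /w => h; apply: ord_inj; have := ltn_ord a; have := ltn_ord b; lia.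
have [U2 [Z2 [uU2 aU2 Z21 zY [cZ2 oZ2 _]]]] :=
  reduce hR (row_mx 0 B *m F1) Z1 winj [set: 'I_n].
rewrite cardsT card_ord in cZ2.
have R2 : forall l : 'I_n, lshift n l \in Z1 -> lshift n l \in Z2.
  move=> l lZ1; apply/negPn/negP => lZ2.
  have sub : lshift n l |: [set rshift n j | j : 'I_n] \subset Z1 :\: Z2.
    apply/subsetP => x; rewrite !inE => /orP[/eqP->|/imsetP[j _ ->]]; first by rewrite lZ1 lZ2.
    rewrite R1 andbT; apply/negP => jZ; have := oZ2 _ _ lZ1 lZ2 jZ.
    rewrite /w /=; have := ltn_ord l; have := ltn_ord j; lia.
  have := subset_leq_card sub; rewrite cardsU1 card_imset; last exact: rshift_inj.
  have -> : lshift n l \notin [set rshift n j | j : 'I_n].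
    apply/imsetP => [[j _ /(congr1 val)]] /=; have := ltn_ord l; lia.
  rewrite ?cardsT card_ord /= => h; have := leq_trans h cZ2; lia.
pose F := F1 *m U2.
have uF : F \in unitmx by rewrite unitmx_mul uF1 uU2.
pose E := row_mx A B *m F.
pose Y := row_mx 0 B *m F.
have EZ : forall i j, j \in Z1 -> E i j = 0.
  move=> i j jZ; rewrite /E /F mulmxA; apply: zero_cols aU2 j jZ.
  by move=> l lZ; apply: zE; rewrite ?inE.
have Er : rsubmx E = 0.
  apply/matrixP => i j; rewrite mxE [in RHS]mxE; exact: EZ (R1 j).
have EE : E = row_mx (lsubmx E) 0 by rewrite -Er hsubmxK.
set D := lsubmx E in EE.
set X := lsubmx Y; set M := rsubmx Y.
pose F11 := ulsubmx F; pose F12 := ursubmx F; pose F21 := dlsubmx F; pose F22 := drsubmx F.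
have Fb : F = block_mx F11 F12 F21 F22 by rewrite submxK.
have EB : E = row_mx (A *m F11 + B *m F21) (A *m F12 + B *m F22) by rewrite /E {1}Fb mul_row_block.
have YB : Y = row_mx (0 *m F11 + B *m F21) (0 *m F12 + B *m F22) by rewrite /Y {1}Fb mul_row_block.
have hAB : A *m F12 + B *m F22 = 0 by rewrite -Er EB row_mxKr.
have hM : M = B *m F22 by rewrite /M YB row_mxKr mul0mx add0r.
exists F; split => //; exists D, M, X; split.
  rewrite block_mxEv mul_col_mx -/E -/Y; congr col_mx; first exact: EE.
  by rewrite /X /M hsubmxK.
split.
  split.
    pose G := invmx F.
    have hG : row_mx A B = row_mx D 0 *m G by rewrite -EE /E /G mulmxK.
    rewrite -[G]submxK mul_row_block !mul0mx !addr0 in hG.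
    have [hA hB] := eq_row_mx hG.
    by split; [exists (ulsubmx G) | exists (ursubmx G)].
  move=> D' [[A1 hA1] [B1 hB1]].
  have hW : row_mx A B = D' *m row_mx A1 B1 by rewrite mul_mx_row -hA1 -hB1.
  pose W := row_mx A1 B1 *m F.
  exists (lsubmx W).
  rewrite /D /E hW -mulmxA -/W -{1}[W]hsubmxK mul_mx_row row_mxKl //.
split.
  exists (- F12), F22; split => //.
  rewrite hM mulmxN; apply/eqP; rewrite -addr_eq0 addrC hAB //.
move=> M' [P [Q [hP hQ]]].
pose V := invmx F *m col_mx P (- Q).
have EV : E *m V = 0.
  rewrite /E /V mulmxA -(mulmxA _ F) mulmxV // mulmx1 mul_row_col -hP mulmxN -hQ.
  by rewrite subrr.
have YV : Y *m V = - M'.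
  rewrite /Y /V mulmxA -(mulmxA _ F) mulmxV // mulmx1 mul_row_col mul0mx add0r.
  by rewrite mulmxN -hQ.
have Vs : forall j x, j \notin Z1 -> V j x = 0.
  move=> j x jZ; rewrite -(acts_left V x aU2 jZ).
  apply: (iZ1 _ (U2 *m V)) => //; first by move=> j' x'; rewrite inE.
  move=> i y _.
  have -> : row_mx A B *m F1 *m (U2 *m V) = E *m V by rewrite /E /F !mulmxA.
  by rewrite EV mxE.
have hY : Y = row_mx 0 B *m F1 *m U2 by rewrite /Y /F mulmxA.
clearbody V Y.
have L0 : lsubmx Y *m usubmx V = 0.
  apply/matrixP => i x; rewrite !mxE big1 // => l _; rewrite !mxE.
  case: (boolP (lshift n l \in Z1)) => lZ; last by rewrite Vs ?mulr0.
  by rewrite hY zY ?inE ?R2 ?mul0r.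
have : Y *m V = M *m dsubmx V.
  by rewrite -{1}[Y]hsubmxK -{1}[V]vsubmxK mul_row_col L0 add0r.
rewrite YV => h; exists (- dsubmx V).
by rewrite mulmxN -h opprK.
Qed.
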